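(* Every $\alpha_{2^-}$ topological space is $\alpha_2$.
   Context: Convention: a ''sequence'' is a countably infinite set. A countably infinite set $A$ in a space $X$ converges to $x\in X$ if $x\notin A$ and every neighborhood of $x$ contains all but finitely many elements of $A$. For a double-indexed family, $\lim_m x_{nm}=x$ means $x_{nm}\neq x$ for all $m$ and every neighborhood of $x$ contains $x_{nm}$ for all but finitely many $m$. A space $X$ is $\alpha_2$ if for each $x\in X$ and all pairwise disjoint sequences $S_1,S_2,\dots\subseteq X$, each converging to $x$, there is a sequence $S\subseteq\bigcup_n S_n$ converging to $x$ such that $S_n\cap S$ is infinite for all $n$. A space $X$ is $\alpha_{2^-}$ if for each $x\in X$, whenever $\lim_m x_{nm}=x$ for all $n\in\mathbb N$, there are $m_1<m_2<\dots$ such that the set $\bigcup_n\{x_{1m_n},\dots,x_{nm_n}\}$ converges to $x$. *)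

(* Defs.v *)
From HB Require Import structures.
From mathcomp Require Import all_boot all_order.
From mathcomp Require Import boolp classical_sets cardinality topology.
Set Implicit Arguments. Unset Strict Implicit. Unset Printing Implicit Defensive.
Local Open Scope classical_set_scope.

Definition is_sequence (T : Type) (A : set T) : Prop :=
  countable A /\ infinite_set A.

Definition set_converges (T : topologicalType) (A : set T) (x : T) : Prop :=
  is_sequence A /\ ~ A x /\ (forall U : set T, nbhs x U -> finite_set (A `\` U)).

(* lim_m x_{nm} = x for a fixed n (here s m = x_{nm}). *)
Definition dlim (T : topologicalType) (s : nat -> T) (x : T) : Prop :=
  (forall m, s m <> x) /\
  (forall U : set T, nbhs x U -> exists M, forall m, (M <= m)%N -> U (s m)).

Definition alpha2 (T : topologicalType) : Prop :=
  forall (x : T) (S : nat -> set T),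
    (forall n, set_converges (S n) x) ->
    (forall n k, n <> k -> S n `&` S k = set0) ->
    exists Sx : set T,
      Sx `<=` \bigcup_n S n /\ set_converges Sx x /\
      (forall n, infinite_set (S n `&` Sx)).

(* Indices start at 0: n = 0,1,2,... corresponds to the paper's 1,2,3,...;
   the set is the union over n of {x_{k,m_n} | k <= n}. *)
Definition alpha2minus (T : topologicalType) : Prop :=
  forall (x : T) (s : nat -> nat -> T),
    (forall n, dlim (s n) x) ->
    exists mm : nat -> nat,
      (forall n, (mm n < mm n.+1)%N) /\
      set_converges [set y | exists n k, (k <= n)%N /\ y = s k (mm n)] x.

(* Main.v *)
Require Import Defs.
From mathcomp Require Import all_boot all_order.
From mathcomp Require Import boolp classical_sets cardinality topology.
From mathcomp Require Import functions.
Local Open Scope classical_set_scope.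

Lemma inj_of_infinite T (A : set T) : infinite_set A ->
  exists f : nat -> T, injective f /\ forall m, A (f m).
Proof.
move/infiniteP/card_leP => -[g].
exists (fun m => val (g (SigSub (@mem_set _ [set: nat] m I)))); split; last first.
  by move=> m; exact: set_valP.
move=> i j /val_inj H.
have := @inj _ _ _ g _ _ (in_setT _) (in_setT _) H.
by case.
Qed.

Lemma finite_bound (B : set nat) : finite_set B -> exists M, forall m, B m -> (m < M)%N.
Proof.
move/finite_fsetP => [X ->]; exists (foldr maxn 0 (finmap.enum_fset X)).+1 => m /= mX; rewrite ltnS.
have : m \in finmap.enum_fset X by [].
clear mX; elim: (finmap.enum_fset X) => //= a s IH; rewrite inE => /orP[/eqP->|/IH].
  exact: leq_maxl.
by move/leq_trans; apply; exact: leq_maxr.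
Qed.

Lemma inj_infinite T (f : nat -> T) (B : set T) : injective f ->
  (forall j, B (f j)) -> infinite_set B.
Proof.
move=> fi fB fin; apply: infinite_nat.
have -> : [set: nat] = f @^-1` B by apply/seteqP; split=> j //= _; exact: fB.
by apply: finite_preimage => // i j _ _; apply: fi.
Qed.

Theorem corollary2p4 (T : topologicalType) : alpha2minus T -> alpha2 T.
Proof.
move=> H x S Sc _.
have /choice[s hs] : forall n, exists f : nat -> T, injective f /\ forall m, S n (f m).
  by move=> n; apply: inj_of_infinite; case: (Sc n) => -[].
have dl : forall n, dlim (s n) x.
  move=> n; case: (Sc n) => _ [nSx cU]; case: (hs n) => sinj sS; split.
    by move=> m e; apply: nSx; rewrite -e; exact: sS.
  move=> U /cU fin.
  have /finite_bound [M hM] : finite_set (s n @^-1` (S n `\` U)).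
    by apply: finite_preimage => // i j _ _; apply: sinj.
  exists M => m Mm; case: (pselect (U (s n m))) => // nU.
  by have := hM m (conj (sS m) nU); rewrite ltnNge Mm.
have [mm [mmi conv]] := H x s dl.
exists [set y | exists n k, (k <= n)%N /\ y = s k (mm n)]; split; last split => //.
  by move=> y [n [k [_ ->]]]; exists k => //; case: (hs k) => _; apply.
move=> n; case: (hs n) => sinj sS.
have mmh := homo_ltn (fun a b c => @ltn_trans a b c) mmi.
apply: (@inj_infinite _ (fun j => s n (mm (j + n)%N))).
  move=> i j /sinj e; apply/eqP; rewrite -(eqn_add2r n); apply/negPn/negP => ne.
  move: e; case: (ltngtP (i + n) (j + n)) ne => // + _.
    by move/mmh => + e; rewrite e ltnn.
  by move/mmh => + e; rewrite e ltnn.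
move=> j; split; first exact: sS.
by exists (j + n)%N, n; split => //; exact: leq_addl.
Qed.
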